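(* Let $A$ be a unital associative (not necessarily commutative) $\mathbb{K}$-algebra and let $\bullet^\ell$ be the left-shift shuffle product on $T(A)$. Then: (1) for every $n\in\mathbb{N}$ and $X\in T(A)$, $X\bullet^\ell 1_A^{\otimes n}=1_A^{\otimes n}\otimes X=1_A^{\otimes n}\bullet^\ell X$; (2) $\bullet^\ell$ is associative with unit $1_{\mathbb{K}}$, and it is commutative if and only if $A$ is commutative.
   Context: $\mathbb{K}$ is a field of characteristic $0$, $A$ has product $[a;b]$ and unit $1_A$. $T(A)=\bigoplus_{n\ge0}A^{\otimes n}$ with $A^{\otimes0}=\mathbb{K}1_{\mathbb{K}}$ ($1_{\mathbb{K}}$ the empty word); $a\otimes1_{\mathbb{K}}$ is identified with $a$, and $1_A^{\otimes n}$ is the word of $n$ copies of $1_A$ ($1_A^{\otimes 0}=1_{\mathbb{K}}$). The left-shift shuffle $\bullet^\ell$ is the bilinear product on $T(A)$ with $k1_{\mathbb{K}}\bullet^\ell U=kU=U\bullet^\ell k1_{\mathbb{K}}$ ($k\in\mathbb{K}$) and, for $a,b\in A$, $U,V\in T(A)$, $(a\otimes U)\bullet^\ell(b\otimes V)=a\otimes\bigl(U\bullet^\ell(b\otimes V)\bigr)+b\otimes\bigl((a\otimes U)\bullet^\ell V\bigr)-[a;b]\otimes1_A\otimes(U\bullet^\ell V)$. *)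

(* Defs.v *)
(* T(A) is modelled as the quotient of the free K-module on
   words over A (monalg: {malg K[seq A]}) by the multilinearity relations. *)
From HB Require Import structures.
From mathcomp Require Import all_boot all_algebra.
From mathcomp Require Import finmap.
From mathcomp.multinomials Require Import monalg.
Set Implicit Arguments. Unset Strict Implicit. Unset Printing Implicit Defensive.
Import GRing.Theory.
Local Open Scope ring_scope.

Section TensorAlgebra.
Variables (K : fieldType) (A : algType K).

Definition TF := {malg K[seq A]}.

(* the basis element a_1 (x) ... (x) a_n ; word [::] is 1_K *)
Definition word (w : seq A) : TF := << w >>.

Definition lift (f : seq A -> TF) (X : TF) : TF :=
  \sum_(w <- msupp X) X@_w *: f w.

Definition pre (a : A) (X : TF) : TF := lift (fun w => word (a :: w)) X.

Definition tcat (u : seq A) (X : TF) : TF := lift (fun w => word (u ++ w)) X.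

Fixpoint shw (u : seq A) : seq A -> TF :=
  match u with
  | [::] => fun v => word v
  | a :: u' =>
      fix shv (v : seq A) : TF :=
        match v with
        | [::] => word (a :: u')
        | b :: v' => pre a (shw u' (b :: v')) + pre b (shv v')
                     - pre (a * b) (pre 1 (shw u' v'))
        end
  end.

Definition shl (X Y : TF) : TF := lift (fun u => lift (fun v => shw u v) Y) X.

Definition ones (n : nat) : seq A := nseq n 1.

Inductive mlrel : TF -> Prop :=
| mlr_add (u v : seq A) (a b : A) :
    mlrel (word (u ++ (a + b) :: v) - word (u ++ a :: v) - word (u ++ b :: v))
| mlr_scale (u v : seq A) (k : K) (a : A) :
    mlrel (word (u ++ (k *: a) :: v) - k *: word (u ++ a :: v))
| mlr0 : mlrel 0
| mlrD (X Y : TF) : mlrel X -> mlrel Y -> mlrel (X + Y)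
| mlrZ (k : K) (X : TF) : mlrel X -> mlrel (k *: X).

Definition teq (X Y : TF) : Prop := mlrel (X - Y).

End TensorAlgebra.

(* Main.v *)
Require Import Defs.
From HB Require Import structures.
From mathcomp Require Import all_boot all_algebra.
From mathcomp Require Import finmap.
From mathcomp.multinomials Require Import monalg.
From mathcomp Require Import zify.
Set Implicit Arguments. Unset Strict Implicit. Unset Printing Implicit Defensive.
Import GRing.Theory.
Local Open Scope fset_scope.
Local Open Scope ring_scope.


Section Abstract.
Variables (R : ringType) (V : zmodType) (sh : V -> V -> V) (pr : R -> V -> V)
  (wd : seq R -> V).
Hypotheses
  (shDl : forall X Y Z, sh (X + Y) Z = sh X Z + sh Y Z)
  (shBl : forall X Y Z, sh (X - Y) Z = sh X Z - sh Y Z)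
  (shDr : forall X Y Z, sh X (Y + Z) = sh X Y + sh X Z)
  (shBr : forall X Y Z, sh X (Y - Z) = sh X Y - sh X Z)
  (prD : forall a X Y, pr a (X + Y) = pr a X + pr a Y)
  (prB : forall a X Y, pr a (X - Y) = pr a X - pr a Y)
  (GG : forall a c M N, sh (pr a M) (pr c N) =
     pr a (sh M (pr c N)) + pr c (sh (pr a M) N) - pr (a * c) (pr 1 (sh M N)))
  (TT : forall M N, sh (pr 1 M) N = pr 1 (sh M N))
  (TT' : forall M N, sh M (pr 1 N) = pr 1 (sh M N))
  (pr_wd : forall a w, pr a (wd w) = wd (a :: w))
  (sh_nil_l : forall X, sh (wd [::]) X = X)
  (sh_nil_r : forall X, sh X (wd [::]) = X).

Lemma ac9 (x1 x2 x3 y1 y2 y3 z1 z2 z3 : V) :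
 (x1 + x2 - x3) + (y1 + y2 - y3) - (z1 + z2 - z3) =
 x1 + y1 + (x2 + y2 - z2) - x3 - y3 - z1 + z3.
Proof. by rewrite !opprD !opprK !addrA (ACl (1*4*2*5*8*3*6*7*9)). Qed.

Lemma ac9' (x1 x2 x3 y1 y2 y3 z1 z2 z3 : V) :
 (x1 + x2 - x3) + (y1 + y2 - y3) - (z1 + z2 - z3) =
 (x1 + y1 - z1) + x2 + y2 - y3 - z2 - x3 + z3.
Proof. by rewrite !opprD !opprK !addrA (ACl (1*4*7*2*5*6*8*3*9)). Qed.

Lemma Lexp a b c P Q S :
 sh (sh (pr a P) (pr b Q)) (pr c S) =
   pr a (sh (sh P (pr b Q)) (pr c S)) + pr b (sh (sh (pr a P) Q) (pr c S))
 + pr c (sh (sh (pr a P) (pr b Q)) S)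
 - pr (a * c) (pr 1 (sh (sh P (pr b Q)) S))
 - pr (b * c) (pr 1 (sh (sh (pr a P) Q) S))
 - pr (a * b) (sh (pr 1 (sh P Q)) (pr c S))
 + pr (a * b * c) (pr 1 (sh (pr 1 (sh P Q)) S)).
Proof.
rewrite (GG a b P Q) !shBl !shDl (GG a c) (GG b c) (GG (a * b) c) !prB !prD.
exact: ac9.
Qed.

Lemma Rexp a b c P Q S :
 sh (pr a P) (sh (pr b Q) (pr c S)) =
   pr a (sh P (sh (pr b Q) (pr c S))) + pr b (sh (pr a P) (sh Q (pr c S)))
 + pr c (sh (pr a P) (sh (pr b Q) S))
 - pr (a * c) (pr 1 (sh P (sh (pr b Q) S)))
 - pr (b * c) (sh (pr a P) (pr 1 (sh Q S)))
 - pr (a * b) (pr 1 (sh P (sh Q (pr c S))))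
 + pr (a * (b * c)) (pr 1 (sh P (pr 1 (sh Q S)))).
Proof.
rewrite (GG b c Q S) !shBr !shDr (GG a b) (GG a c) (GG a (b * c)) !prB !prD.
exact: ac9'.
Qed.

Lemma assoc_w n u v w : (size u + size v + size w <= n)%N ->
  sh (sh (wd u) (wd v)) (wd w) = sh (wd u) (sh (wd v) (wd w)).
Proof.
elim: n u v w => [|n IH] [|a u] [|b v] [|c w] //= Hs;
  rewrite ?sh_nil_l ?sh_nil_r //.
rewrite -!pr_wd Lexp Rexp !TT !TT' !pr_wd -mulrA.
rewrite !IH //=; lia.
Qed.
End Abstract.

Require Import Defs.
From HB Require Import structures.
From mathcomp Require Import all_boot all_algebra.
From mathcomp Require Import finmap.
From mathcomp.multinomials Require Import monalg.
From mathcomp Require Import zify.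
Set Implicit Arguments. Unset Strict Implicit. Unset Printing Implicit Defensive.
Import GRing.Theory.
Local Open Scope fset_scope.
Local Open Scope ring_scope.

Section Lift.
Variables (K : fieldType) (A : algType K).
Local Notation TF := (TF A).
Local Notation lift := (@Defs.lift K A).
Local Notation word := (@Defs.word K A).
Implicit Types (X Y Z M N P Q R : TF) (f g : seq A -> TF) (a b c : A) (u v w : seq A).

Lemma liftEw f X (d : {fset seq A}) : msupp X `<=` d ->
  lift f X = \sum_(w <- d) X@_w *: f w.
Proof.
move=> le; rewrite /lift [LHS](big_fset_incl _ le) => //= x xd /mcoeff_outdom ->.
by rewrite scale0r.
Qed.

Lemma lift_word f w : lift f (word w) = f w.
Proof. by rewrite /word (liftEw _ msuppU_le) big_seq_fset1 mcoeffUU scale1r. Qed.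

Lemma liftD f X Y : lift f (X + Y) = lift f X + lift f Y.
Proof.
have h1 : msupp X `<=` msupp X `|` msupp Y by apply: fsubsetUl.
have h2 : msupp Y `<=` msupp X `|` msupp Y by apply: fsubsetUr.
rewrite (liftEw _ (msuppD_le _ _)) (liftEw _ h1) (liftEw _ h2) -big_split /=.
by apply: eq_bigr => w _; rewrite mcoeffD scalerDl.
Qed.

Lemma liftB f X Y : lift f (X - Y) = lift f X - lift f Y.
Proof.
have h1 : msupp X `<=` msupp X `|` msupp Y by apply: fsubsetUl.
have h2 : msupp Y `<=` msupp X `|` msupp Y by apply: fsubsetUr.
rewrite (liftEw _ (msuppB_le _ _)) (liftEw _ h1) (liftEw _ h2) -sumrB /=.
by apply: eq_bigr => w _; rewrite mcoeffB scalerBl.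
Qed.

Lemma lift0 f : lift f 0 = 0.
Proof. by rewrite /lift msupp0 big_seq_fset0. Qed.

Lemma liftZ f k X : lift f (k *: X) = k *: lift f X.
Proof.
rewrite (liftEw _ (msuppZ_le k X)) /lift scaler_sumr; apply: eq_bigr => w _.
by rewrite mcoeffZ scalerA.
Qed.

Lemma lift_ext f g X : (forall w, f w = g w) -> lift f X = lift g X.
Proof. by move=> e; apply: eq_bigr => w _; rewrite e. Qed.

Lemma lift_fD f g X : lift (fun w => f w + g w) X = lift f X + lift g X.
Proof. by rewrite /lift -big_split; apply: eq_bigr => w _; rewrite scalerDr. Qed.

Lemma lift_fB f g X : lift (fun w => f w - g w) X = lift f X - lift g X.
Proof. by rewrite /lift -sumrB; apply: eq_bigr => w _; rewrite scalerBr. Qed.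

Lemma lift_id X : lift word X = X.
Proof.
rewrite {2}(monalgE X); apply: eq_bigr => w _; apply/malgP => k.
by rewrite /word mcoeffZ !mcoeffU mulr_natr.
Qed.

Definition lin (L : TF -> TF) :=
  (forall X Y, L (X + Y) = L X + L Y) /\ (forall k X, L (k *: X) = k *: L X).

Lemma lin0 L : lin L -> L 0 = 0.
Proof. by case=> _ hZ; have := hZ 0 0; rewrite !scale0r. Qed.

Lemma linB L : lin L -> forall X Y, L (X - Y) = L X - L Y.
Proof. by case=> hD _ X Y; apply/eqP; rewrite eq_sym subr_eq -hD subrK. Qed.

Lemma lin_lift L f X : lin L -> L (lift f X) = lift (fun w => L (f w)) X.
Proof.
move=> hL; have [hD hZ] := hL; rewrite /Defs.lift (big_morph L hD (lin0 hL)).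
by apply: eq_bigr => w _; rewrite hZ.
Qed.

Lemma lin_ext L X : lin L -> L X = lift (fun w => L (word w)) X.
Proof. by move=> hL; rewrite -{1}(lift_id X) lin_lift. Qed.

Lemma lin_eq L1 L2 X : lin L1 -> lin L2 ->
  (forall w, L1 (word w) = L2 (word w)) -> L1 X = L2 X.
Proof. by move=> h1 h2 e; rewrite (lin_ext _ h1) (lin_ext _ h2); apply: lift_ext. Qed.

Lemma lift_fZ f k X : lift (fun w => k *: f w) X = k *: lift f X.
Proof. by rewrite /Defs.lift scaler_sumr; apply: eq_bigr => w _; rewrite !scalerA mulrC. Qed.

Lemma lin_liftf f : lin (lift f).
Proof. by split; [apply: liftD | apply: liftZ]. Qed.

Lemma lin_id : lin (fun X => X).
Proof. by []. Qed.

Lemma lin_idf : lin id.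
Proof. by []. Qed.

Lemma lin_add L1 L2 : lin L1 -> lin L2 -> lin (fun X => L1 X + L2 X).
Proof.
move=> [d1 z1] [d2 z2]; split => [X Y|k X]; first by rewrite d1 d2 addrACA.
by rewrite z1 z2 scalerDr.
Qed.

Lemma lin_sub L1 L2 : lin L1 -> lin L2 -> lin (fun X => L1 X - L2 X).
Proof.
move=> [d1 z1] [d2 z2]; split => [X Y|k X]; first by rewrite d1 d2 opprD addrACA.
by rewrite z1 z2 scalerBr.
Qed.

Lemma lin_comp L1 L2 : lin L1 -> lin L2 -> lin (fun X => L1 (L2 X)).
Proof.
move=> [d1 z1] [d2 z2]; split => [X Y|k X]; first by rewrite d2 d1.
by rewrite z2 z1.
Qed.

Lemma pre_lin a : lin (pre a).
Proof. exact: lin_liftf. Qed.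

Lemma shll_lin Y : lin (fun X => shl X Y).
Proof. exact: lin_liftf. Qed.

Lemma shlr_lin X : lin (shl X).
Proof.
split => [Y1 Y2|k Y]; rewrite /shl.
  by rewrite -lift_fD; apply: lift_ext => u; rewrite liftD.
by rewrite -lift_fZ; apply: lift_ext => u; rewrite liftZ.
Qed.

Lemma lin_pre a L : lin L -> lin (fun X => pre a (L X)).
Proof. by move=> h; apply: lin_comp h; apply: pre_lin. Qed.

Lemma lin_shll Y L : lin L -> lin (fun X => shl (L X) Y).
Proof. by move=> h; apply: (lin_comp (shll_lin Y)) h. Qed.

Lemma lin_shlr Y L : lin L -> lin (fun X => shl Y (L X)).
Proof. by move=> h; apply: (lin_comp (shlr_lin Y)) h. Qed.

Lemma pre_word a w : pre a (word w) = word (a :: w).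
Proof. by rewrite /pre lift_word. Qed.

Lemma shl_wordl u Y : shl (word u) Y = lift (shw u) Y.
Proof. by rewrite /shl lift_word. Qed.

Lemma shl_word u v : shl (word u) (word v) = shw u v.
Proof. by rewrite shl_wordl lift_word. Qed.

Lemma shw_cons a u b v : shw (a :: u) (b :: v) =
  pre a (shw u (b :: v)) + pre b (shw (a :: u) v) - pre (a * b) (pre 1 (shw u v)).
Proof. by []. Qed.

Lemma shw_nil_l v : shw [::] v = word v. Proof. by []. Qed.
Lemma shw_nil_r u : shw u [::] = word u. Proof. by case: u. Qed.

Ltac linauto := repeat match goal with
  | |- lin (fun x => @?F x - @?H x) => apply: (lin_sub (L1 := F) (L2 := H))
  | |- lin (fun x => @?F x + @?H x) => apply: (lin_add (L1 := F) (L2 := H))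
  | |- lin (fun x => pre ?a (@?F x)) => apply: (lin_pre a (L := F))
  | |- lin (fun x => shl ?M (@?F x)) => apply: (lin_shlr M (L := F))
  | |- lin (fun x => shl (@?F x) ?N) => apply: (lin_shll N (L := F))
  | |- lin (fun x => x) => exact: lin_id
  | |- lin id => exact: lin_idf
  | |- lin (pre _) => exact: pre_lin
  | |- lin (shl _) => exact: shlr_lin
  end.

Lemma G a c M N : shl (pre a M) (pre c N) =
  pre a (shl M (pre c N)) + pre c (shl (pre a M) N) - pre (a * c) (pre 1 (shl M N)).
Proof.
pose L1 := fun M => shl (pre a M) (pre c N).
pose L2 := fun M => pre a (shl M (pre c N)) + pre c (shl (pre a M) N) - pre (a * c) (pre 1 (shl M N)).
change (L1 M = L2 M); apply: lin_eq; [by rewrite /L1; linauto | by rewrite /L2; linauto | rewrite /L1 /L2].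
move=> u {L1 L2}.
pose L1 := fun N => shl (pre a (word u)) (pre c N).
pose L2 := fun N => pre a (shl (word u) (pre c N)) + pre c (shl (pre a (word u)) N) - pre (a * c) (pre 1 (shl (word u) N)).
change (L1 N = L2 N); apply: lin_eq; [by rewrite /L1; linauto | by rewrite /L2; linauto | rewrite /L1 /L2].
by move=> v; rewrite !pre_word !shl_word shw_cons.
Qed.

Lemma shlDl X Y Z : shl (X + Y) Z = shl X Z + shl Y Z.
Proof. by case: (shll_lin Z) => h _; apply: h. Qed.
Lemma shlBl X Y Z : shl (X - Y) Z = shl X Z - shl Y Z.
Proof. exact: (linB (shll_lin Z)). Qed.
Lemma shlDr X Y Z : shl X (Y + Z) = shl X Y + shl X Z.
Proof. by case: (shlr_lin X) => h _; apply: h. Qed.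
Lemma shlBr X Y Z : shl X (Y - Z) = shl X Y - shl X Z.
Proof. exact: (linB (shlr_lin X)). Qed.
Lemma preD a X Y : pre a (X + Y) = pre a X + pre a Y.
Proof. by case: (pre_lin a) => h _; apply: h. Qed.
Lemma preB a X Y : pre a (X - Y) = pre a X - pre a Y.
Proof. exact: (linB (pre_lin a)). Qed.



Lemma shl_nil_l X : shl (word [::]) X = X.
Proof. by rewrite shl_wordl -{2}(lift_id X). Qed.

Lemma shl_nil_r X : shl X (word [::]) = X.
Proof.
rewrite /shl -{2}(lift_id X); apply: lift_ext => u.
by rewrite lift_word shw_nil_r.
Qed.

Lemma shw_1l u v : shw (1 :: u) v = pre 1 (shw u v).
Proof.
elim: v => [|c v IH]; first by rewrite !shw_nil_r pre_word.
by rewrite shw_cons IH mul1r addrK.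
Qed.

Lemma shw_1r u v : shw u (1 :: v) = pre 1 (shw u v).
Proof.
elim: u => [|a u IH]; first by rewrite !shw_nil_l pre_word.
by rewrite shw_cons IH mulr1 addrAC subrr add0r.
Qed.

Lemma TT M N : shl (pre 1 M) N = pre 1 (shl M N).
Proof.
pose L1 := fun M => shl (pre 1 M) N.
pose L2 := fun M => pre 1 (shl M N).
change (L1 M = L2 M); apply: lin_eq; [by rewrite /L1; linauto | by rewrite /L2; linauto | rewrite /L1 /L2].
move=> u {L1 L2}.
pose L1 := fun N => shl (pre 1 (word u)) N.
pose L2 := fun N => pre 1 (shl (word u) N).
change (L1 N = L2 N); apply: lin_eq; [by rewrite /L1; linauto | by rewrite /L2; linauto | rewrite /L1 /L2].
by move=> v; rewrite pre_word !shl_word shw_1l.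
Qed.

Lemma TT' M N : shl M (pre 1 N) = pre 1 (shl M N).
Proof.
pose L1 := fun M => shl M (pre 1 N).
pose L2 := fun M => pre 1 (shl M N).
change (L1 M = L2 M); apply: lin_eq; [by rewrite /L1; linauto | by rewrite /L2; linauto | rewrite /L1 /L2].
move=> u {L1 L2}.
pose L1 := fun N => shl (word u) (pre 1 N).
pose L2 := fun N => pre 1 (shl (word u) N).
change (L1 N = L2 N); apply: lin_eq; [by rewrite /L1; linauto | by rewrite /L2; linauto | rewrite /L1 /L2].
by move=> v; rewrite pre_word !shl_word shw_1r.
Qed.

Lemma shl_assoc X Y Z : shl (shl X Y) Z = shl X (shl Y Z).
Proof.
pose L1 := fun X => shl (shl X Y) Z.
pose L2 := fun X => shl X (shl Y Z).
change (L1 X = L2 X); apply: lin_eq; [by rewrite /L1; linauto | by rewrite /L2; linauto | rewrite /L1 /L2].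
move=> u {L1 L2}.
pose L1 := fun Y => shl (shl (word u) Y) Z.
pose L2 := fun Y => shl (word u) (shl Y Z).
change (L1 Y = L2 Y); apply: lin_eq; [by rewrite /L1; linauto | by rewrite /L2; linauto | rewrite /L1 /L2].
move=> v {L1 L2}.
pose L1 := fun Z => shl (shl (word u) (word v)) Z.
pose L2 := fun Z => shl (word u) (shl (word v) Z).
change (L1 Z = L2 Z); apply: lin_eq; [by rewrite /L1; linauto | by rewrite /L2; linauto | rewrite /L1 /L2].
move=> w /=.
have := assoc_w shlDl shlBl shlDr shlBr preD preB G TT TT' pre_word shl_nil_l shl_nil_r.
by move/(_ _ u v w (leqnn _)).
Qed.

Lemma tcat_nil X : tcat [::] X = X.
Proof. exact: lift_id. Qed.

Lemma tcat_1 n X : tcat (ones A n.+1) X = pre 1 (tcat (ones A n) X).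
Proof. by rewrite /tcat (lin_lift _ _ (pre_lin 1)); apply: lift_ext => w; rewrite pre_word. Qed.

Lemma part1 n X : shl X (word (ones A n)) = tcat (ones A n) X /\
                  tcat (ones A n) X = shl (word (ones A n)) X.
Proof.
elim: n => [|n [IH1 IH2]]; first by rewrite tcat_nil shl_nil_l shl_nil_r.
have e : word (ones A n.+1) = pre 1 (word (ones A n)) by rewrite pre_word.
by rewrite e tcat_1 TT TT' IH1 IH2.
Qed.

Lemma shw_comm (hc : forall a b : A, a * b = b * a) u v : shw u v = shw v u.
Proof.
elim: u v => [|a u IHu] v; first by rewrite shw_nil_l shw_nil_r.
elim: v => [|b v IHv]; first by rewrite shw_nil_l shw_nil_r.
by rewrite !shw_cons IHu IHv [shw u v]IHu hc [pre a _ + _]addrC.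
Qed.

Lemma shl_comm (hc : forall a b : A, a * b = b * a) X Y : shl X Y = shl Y X.
Proof.
pose L1 := fun X => shl X Y.
pose L2 := fun X => shl Y X.
change (L1 X = L2 X); apply: lin_eq; [by rewrite /L1; linauto | by rewrite /L2; linauto | rewrite /L1 /L2].
move=> u {L1 L2}.
pose L1 := fun Y => shl (word u) Y.
pose L2 := fun Y => shl Y (word u).
change (L1 Y = L2 Y); apply: lin_eq; [by rewrite /L1; linauto | by rewrite /L2; linauto | rewrite /L1 /L2].
by move=> v; rewrite !shl_word shw_comm.
Qed.

Definition phi X : A := mmap (in_alg A) (fun w : seq A => foldr *%R 1 w) X.

Lemma phiB X Y : phi (X - Y) = phi X - phi Y.
Proof. exact: mmapB. Qed.
Lemma phiD X Y : phi (X + Y) = phi X + phi Y.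
Proof. exact: mmapD. Qed.
Lemma phi0 : phi 0 = 0.
Proof. exact: mmap0. Qed.
Lemma phi_word w : phi (word w) = foldr *%R 1 w.
Proof. by rewrite /phi /Defs.word mmapU /= scale1r mul1r. Qed.
Lemma phiZ k X : phi (k *: X) = k *: phi X.
Proof.
rewrite /phi (mmapEw (msuppZ_le k X)) mmapE scaler_sumr; apply: eq_bigr => w _.
by rewrite mcoeffZ /= -scalerA -scalerAl.
Qed.

Lemma prod_cat u w : foldr *%R (1 : A) (u ++ w) = foldr *%R 1 u * foldr *%R 1 w.
Proof. by elim: u => [|a u IH] /=; rewrite ?mul1r // IH mulrA. Qed.

Lemma phi_mlrel X : mlrel X -> phi X = 0.
Proof.
elim => {X}.
- move=> u v a b; rewrite !phiB !phi_word !prod_cat /= mulrDl mulrDr.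
  by apply/eqP; rewrite subr_eq0 addrC addKr.
- move=> u v k a; rewrite phiB phiZ !phi_word !prod_cat /= -[k *: a * _]scalerAl.
  by rewrite -scalerAr subrr.
- exact: phi0.
- by move=> X Y _ h1 _ h2; rewrite phiD h1 h2 addr0.
- by move=> k X _ h; rewrite phiZ h scaler0.
Qed.

Lemma teq_eq X Y : X = Y -> teq X Y.
Proof. by move=> ->; rewrite /teq subrr; exact: mlr0. Qed.

End Lift.

Theorem proposition4p5 (K : fieldType) (A : algType K)
    (charK0 : [pchar K] =i pred0) :
  (* (1) *)
  (forall (n : nat) (X : TF A),
      teq (shl X (word (ones A n))) (tcat (ones A n) X) /\
      teq (tcat (ones A n) X) (shl (word (ones A n)) X)) /\
  (* (2) associativity *)
  (forall X Y Z : TF A, teq (shl (shl X Y) Z) (shl X (shl Y Z))) /\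
  (* (2) unit 1_K *)
  (forall X : TF A, teq (shl (word [::]) X) X /\ teq (shl X (word [::])) X) /\
  (* (2) commutativity iff A commutative *)
  ((forall X Y : TF A, teq (shl X Y) (shl Y X)) <->
   (forall a b : A, a * b = b * a)).
Proof.
split; first by move=> n X; have [h1 h2] := part1 n X; split; apply: teq_eq.
split; first by move=> X Y Z; apply/teq_eq/shl_assoc.
split; first by move=> X; split; apply: teq_eq; [apply: shl_nil_l | apply: shl_nil_r].
split => [H a b | hc X Y]; last by apply/teq_eq/shl_comm.
have h := phi_mlrel (H (word [:: a]) (word [:: b])).
rewrite !shl_word !shw_cons !shw_nil_l !shw_nil_r !pre_word in h.
rewrite !phiB !phiD !phi_word /= !mulr1 in h.
move/eqP: h; rewrite subr_eq0 addrC addKr addrC addKr => /eqP ->.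
by [].
Qed.
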